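(* Let $P$ be a field, $X=\{x_1,\ldots,x_n\}$ a finite set, and let $W(X)$ be either the free commutative (unital) algebra $P[x_1,\ldots,x_n]$ or the free associative (unital) algebra over $P$ on $X$. Then $W(X)$ is almost central: every bijection $\mu:W(X)\to W(X)$ satisfying $\mu s=s\mu$ for all $s\in\mathrm{End}(W(X))$ is linear, i.e. there exist $a,b\in P$ with $a\neq 0$ such that $\mu(u)=au+b$ for all $u\in W(X)$.
   Context: $\mathrm{End}(W(X))$ denotes the semigroup of all (unital) algebra endomorphisms of $W(X)$. A bijection $\mu$ of $W(X)$ is called central if it commutes with every endomorphism of $W(X)$; an algebra is called almost central if each of its central bijections is of the form $u\mapsto au+b$ with $a,b\in P$, $a\neq0$. *)

(* Defs.v *)
From HB Require Import structures.
From mathcomp Require Import all_boot all_order all_algebra.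
From mathcomp Require Import monalg mpoly.
Set Implicit Arguments. Unset Strict Implicit. Unset Printing Implicit Defensive.
Import GRing.Theory.
Local Open Scope ring_scope.

Definition alg_endo (P : fieldType) (A : lalgType P) (s : A -> A) : Prop :=
  linear s /\ monoid_morphism s.

Definition central_bij (P : fieldType) (A : lalgType P) (mu : A -> A) : Prop :=
  bijective mu /\ forall s : A -> A, alg_endo s -> forall u, mu (s u) = s (mu u).

Definition almost_central (P : fieldType) (A : lalgType P) : Prop :=
  forall mu : A -> A, central_bij mu ->
    exists a b : P, a != 0 /\ forall u : A, mu u = a *: u + b%:A.

Notation free_comm_alg P n := {mpoly P[n]} (only parsing).
(* The free associative unital algebra P<x_1..x_n>: monoid algebra of the
   free monoid on 'I_n *)
Notation free_assoc_alg P n := {malg P[{fmonom 'I_n}]} (only parsing).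

(* Main.v *)
Require Import Defs.
From HB Require Import structures.
From mathcomp Require Import all_boot all_order all_algebra.
From mathcomp Require Import monalg mpoly.
Set Implicit Arguments. Unset Strict Implicit. Unset Printing Implicit Defensive.
Import GRing.Theory.
Local Open Scope ring_scope.

Section Generic.
Variables (P : fieldType) (A : lalgType P).
Hypothesis comm_sc : forall (c : P) (u : A), u * c%:A = c%:A * u.

Let cfu (u : A) : commr_rmorph (in_alg A) u := fun c => comm_sc c u.
Let H (u : A) := horner_morph (cfu u).

Lemma lin0 (B C : lmodType P) (s : B -> C) : linear s -> s 0 = 0.
Proof.
move=> ls; have := ls (-1) 0 0.
by rewrite scaler0 addr0 scaleN1r addNr.
Qed.

Lemma linD (B C : lmodType P) (s : B -> C) : linear s -> forall u v, s (u + v) = s u + s v.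
Proof. by move=> ls u v; have := ls 1 u v; rewrite !scale1r. Qed.

Lemma linZ (B C : lmodType P) (s : B -> C) : linear s -> forall c u, s (c *: u) = c *: s u.
Proof. by move=> ls c u; have := ls c u 0; rewrite !addr0 (lin0 ls) addr0. Qed.

Lemma H_endo (s : A -> A) : alg_endo s -> forall (u : A) q, s (H u q) = H (s u) q.
Proof.
case=> ls [s1 sM] u; rewrite /H; elim/poly_ind => [|q c IH].
  by rewrite !rmorph0 (lin0 ls).
rewrite !rmorphD !rmorphM /= !horner_morphX !horner_morphC (linD ls) sM IH.
by rewrite /= (linZ ls) s1.
Qed.

Lemma H_phi (phi : A -> {poly P}) : linear phi -> monoid_morphism phi ->
  forall (u : A) q, phi (H u q) = q \Po phi u.
Proof.
move=> ls [s1 sM] u; rewrite /H; elim/poly_ind => [|q c IH].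
  by rewrite !rmorph0 (lin0 ls).

rewrite !rmorphD !rmorphM /= !horner_morphX !horner_morphC (linD ls) sM IH.
by rewrite /= (linZ ls) s1 comp_polyX comp_polyC alg_polyC.
Qed.

Lemma generic (x : A) (phi : A -> {poly P}) :
  linear phi -> monoid_morphism phi -> phi x = 'X ->
  (forall u, exists s, alg_endo s /\ s x = u) -> almost_central A.
Proof.
move=> lphi mphi phix Hsub mu [[nu muK nuK] Hc].
pose tau a := H x (phi a).
have tauE : alg_endo tau.
  split.
    move=> c u v; rewrite /tau /H lphi rmorphD; congr (_ + _).
    by rewrite -mul_polyC rmorphM /= horner_morphC mulr_algl.
  case: mphi => p1 pM; split; first by rewrite /tau /H p1 rmorph1.
  by move=> a b; rewrite /tau /H pM rmorphM.
have taux : tau x = x by rewrite /tau /H phix horner_morphX.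
set q := phi (mu x).
have muxE : mu x = H x q by rewrite -{1}taux Hc.
have muE : forall u, mu u = H u q.
  move=> u; have [s [es sx]] := Hsub u.
  by rewrite -sx Hc // muxE H_endo.
have e := congr1 phi (nuK x); rewrite muE /H (H_phi lphi mphi) phix in e.
have := congr1 (fun p : {poly P} => (size p).-1) e; rewrite /= size_comp_poly size_polyX /= => h.
have /andP[/eqP sq _] : ((size q).-1 == 1%N) && ((size (phi (nu x))).-1 == 1%N).
  by rewrite -muln_eq1 h.
have sq2 : size q = 2%N by move: sq; case: (size q) => // n /= ->.
exists q`_1, q`_0; split.
  have : lead_coef q != 0 by rewrite lead_coef_eq0 -size_poly_eq0 sq2.
  by rewrite lead_coefE sq2.
have qE : q = (q`_1)%:P * 'X + (q`_0)%:P.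
  apply/polyP=> i; rewrite coefD coefMX !coefC.
  case: i => [|[|i]] /=; rewrite ?add0r ?addr0 //.
  by rewrite nth_default ?sq2.
move=> u; rewrite muE {1}qE.
by rewrite /H rmorphD rmorphM /= !horner_morphC horner_morphX mulr_algl.
Qed.
End Generic.

Section Comm.
Variables (P : fieldType) (k : nat).
Local Notation A := {mpoly P[k.+1]}.

Lemma comm_case : almost_central A.
Proof.
pose hphi := fun i : 'I_k.+1 => if i == ord0 then ('X : {poly P}) else 0.
pose phi := mpoly.mmap (@polyC P) hphi.
apply: (@generic P A (fun c u => mulrC _ _) ('X_ord0) phi).
- move=> c u v; rewrite /phi raddfD /= mpoly.mmapZ /= mul_polyC //.
- split; [exact: rmorph1 | exact: rmorphM].
- by rewrite /phi mpoly.mmapX mpoly.mmap1U /hphi eqxx.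
- move=> u; exists (mpoly.mmap (in_alg A) (fun _ => u)); split; last first.
    by rewrite mpoly.mmapX mpoly.mmap1U.
  split.
    by move=> c p q; rewrite raddfD /= mpoly.mmapZ /= mulr_algl.
  split; [exact: rmorph1 | exact: rmorphM].
Qed.
End Comm.

Section Assoc.
Variables (P : fieldType) (k : nat).
Local Notation M := {fmonom 'I_k.+1}.
Local Notation A := {malg P[M]}.

Definition hv (S : nzRingType) (v : 'I_k.+1 -> S) (m : M) : S :=
  \prod_(i <- fmonom_val m) v i.

Lemma hv_mm (S : nzRingType) (v : 'I_k.+1 -> S) : mmorphism (hv v).
Proof.
split; last by rewrite /hv fm1 big_nil.
by move=> m1 m2; rewrite /hv fmM big_cat.
Qed.

HB.instance Definition _ (S : nzRingType) (v : 'I_k.+1 -> S) :=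
  isMultiplicative.Build M S (hv v) (hv_mm v).

Lemma hvU (S : nzRingType) (v : 'I_k.+1 -> S) i : hv v (fmu i) = v i.
Proof. by rewrite /hv fmuE big_seq1. Qed.

Lemma malg_comm_sc (c : P) (u : A) : u * c%:A = c%:A * u.
Proof.
have -> : c%:A = @mkmalgU M P mone c :> A by rewrite -[mkmalgU _ _]mulr1 mul_malgC.
rewrite !malgM_def fgmulgU fgmulUg; apply: eq_bigr => m _.
by rewrite mulrC mulm1 mul1m.
Qed.

Lemma assoc_case : almost_central A.
Proof.
pose hphi := fun i : 'I_k.+1 => if i == ord0 then ('X : {poly P}) else 0.
pose phi := monalg.mmap (@polyC P) (hv hphi).
apply: (@generic P A malg_comm_sc (<< fmu (ord0 : 'I_k.+1) >>) phi).
- move=> c u v; rewrite /phi raddfD /= monalg.mmapZ /= mul_polyC //.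
- split; [exact: rmorph1 | exact: rmorphM].
- by rewrite /phi monalg.mmapU hvU /hphi eqxx /= polyC1 mul1r.
- move=> u; pose s := monalg.mmap (in_alg A) (hv (fun _ => u)).
  have sM : GRing.multiplicative s.
    apply: monalg.commr_mmap_is_multiplicative => g m m'.
    by rewrite /GRing.comm /= malg_comm_sc.
  exists s; split; last first.
    by rewrite /s monalg.mmapU hvU /= scale1r mul1r.
  split.
    by move=> c p q; rewrite /s raddfD /= monalg.mmapZ /= mulr_algl.
  by case: sM.
Qed.
End Assoc.

Theorem theorem2 (P : fieldType) (n : nat) (hn : (0 < n)%N) :
  almost_central {mpoly P[n]} /\ almost_central {malg P[{fmonom 'I_n}]}.
Proof.
case: n hn => // k _; split; [exact: comm_case | exact: assoc_case].
Qed.
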